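(* Let $e$ be as in the context, and let $\mu:\Pi_0\to\Pi_0$ be its monodromy. Then $\mu$ is an orientation-preserving isometry of the plane $\Pi_0$. Its linear part is the rotation through the angle $\int_0^L k_e(s)\,ds$, the total curvature of $e$, measured in the direction from $\mathbf{n}_e(0)$ towards $\mathbf{t}_e(0)$.
   Context: $e:\mathbb{R}\to\mathbb{R}^3$ is a smooth closed curve, $L$-periodic and parametrized by arclength $s$. Its curvature is $k_e>0$ and its torsion $\tau_e\neq0$ everywhere. Its Frenet frame is $(\mathbf{t}_e,\mathbf{n}_e,\mathbf{b}_e)$, with $\mathbf{t}_e'=k_e\mathbf{n}_e$, $\mathbf{n}_e'=-k_e\mathbf{t}_e+\tau_e\mathbf{b}_e$, $\mathbf{b}_e'=-\tau_e\mathbf{n}_e$. Let $\Pi_s=e(s)+\operatorname{span}(\mathbf{t}_e(s),\mathbf{n}_e(s))$ be the osculating plane at $e(s)$; note $\Pi_L=\Pi_0$. For $p\in\Pi_0$, the involute through $p$ is the unique smooth curve $\xi_p:[0,L]\to\mathbb{R}^3$ with $\xi_p(0)=p$, $\xi_p(s)\in\Pi_s$ and $\xi_p'(s)$ parallel to $\mathbf{b}_e(s)$ for all $s$. The monodromy is the map $\mu:\Pi_0\to\Pi_0$, $\mu(p)=\xi_p(L)$. *)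

(* Defs.v *)
From Stdlib Require Import Reals.
From Coquelicot Require Import Coquelicot.
Open Scope R_scope.

Definition V3 : Type := (R * R * R)%type.
Definition mkV (a b c : R) : V3 := (a, b, c).
Definition vx (v : V3) : R := fst (fst v).
Definition vy (v : V3) : R := snd (fst v).
Definition vz (v : V3) : R := snd v.

Definition vadd (u v : V3) : V3 := mkV (vx u + vx v) (vy u + vy v) (vz u + vz v).
Definition vscal (a : R) (v : V3) : V3 := mkV (a * vx v) (a * vy v) (a * vz v).
Definition vsub (u v : V3) : V3 := vadd u (vscal (-1) v).
Definition dot (u v : V3) : R := vx u * vx v + vy u * vy v + vz u * vz v.
Definition cross (u v : V3) : V3 :=
  mkV (vy u * vz v - vz u * vy v)
      (vz u * vx v - vx u * vz v)
      (vx u * vy v - vy u * vx v).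

Definition vderiv (f : R -> V3) (s : R) (d : V3) : Prop :=
  is_derive (fun u => vx (f u)) s (vx d) /\
  is_derive (fun u => vy (f u)) s (vy d) /\
  is_derive (fun u => vz (f u)) s (vz d).

Definition vsmooth (f : R -> V3) : Prop :=
  forall (m : nat) (x : R),
    ex_derive_n (fun u => vx (f u)) m x /\
    ex_derive_n (fun u => vy (f u)) m x /\
    ex_derive_n (fun u => vz (f u)) m x.

Definition frenet_closed_curve (L : R) (e : R -> V3) (k tau : R -> R)
  (t n b : R -> V3) : Prop :=
  0 < L /\
  vsmooth e /\
  (forall s, e (s + L) = e s) /\
  (forall s, vderiv e s (t s)) /\
  (forall s, dot (t s) (t s) = 1) /\
  (forall s, dot (n s) (n s) = 1) /\
  (forall s, dot (t s) (n s) = 0) /\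
  (forall s, b s = cross (t s) (n s)) /\
  (forall s, 0 < k s) /\
  (forall s, tau s <> 0) /\
  (forall s, vderiv t s (vscal (k s) (n s))) /\
  (forall s, vderiv n s (vadd (vscal (- k s) (t s)) (vscal (tau s) (b s)))) /\
  (forall s, vderiv b s (vscal (- tau s) (n s))).

Definition in_osc (e : R -> V3) (t n : R -> V3) (s : R) (x : V3) : Prop :=
  exists alpha beta : R, x = vadd (e s) (vadd (vscal alpha (t s)) (vscal beta (n s))).

Definition is_involute (L : R) (e t n b : R -> V3) (p : V3) (xi : R -> V3) : Prop :=
  vsmooth xi /\ xi 0 = p /\
  forall s, 0 <= s <= L ->
    in_osc e t n s (xi s) /\
    exists (lam : R) (d : V3), vderiv xi s d /\ d = vscal lam (b s).

(* Rotation of the direction plane span(t0, n0) through the angle theta,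
   in the direction from n0 towards t0: n0 |-> cos theta n0 + sin theta t0,
   t0 |-> cos theta t0 - sin theta n0. *)
Definition rot (theta : R) (t0 n0 v : V3) : V3 :=
  let x := dot v t0 in
  let y := dot v n0 in
  vadd (vscal (cos theta * x + sin theta * y) t0)
       (vscal (cos theta * y - sin theta * x) n0).

(* Main.v *)
Require Import Defs.
From Stdlib Require Import Reals.
From Coquelicot Require Import Coquelicot.
Open Scope R_scope.
From Stdlib Require Import Lra FunctionalExtensionality.

Lemma D_eq (f : R -> R) (x a b : R) : is_derive f x a -> a = b -> is_derive f x b.
Proof. intros H ->; exact H. Qed.
Lemma D_plus (f g : R -> R) (x a b : R) : is_derive f x a -> is_derive g x b ->
  is_derive (fun y => f y + g y) x (a + b).
Proof. intros; apply (is_derive_plus f g x a b); auto. Qed.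
Lemma D_mult (f g : R -> R) (x a b : R) : is_derive f x a -> is_derive g x b ->
  is_derive (fun y => f y * g y) x (a * g x + f x * b).
Proof. intros; apply (is_derive_mult f g x a b); auto. intros; apply Rmult_comm. Qed.
Lemma D_const (c x : R) : is_derive (fun _ => c) x 0.
Proof. apply (is_derive_const c x). Qed.
Lemma D_compf (g f : R -> R) x a b : is_derive g (f x) a -> is_derive f x b ->
  is_derive (fun y => g (f y)) x (b * a).
Proof. intros; apply (is_derive_comp g f x a b); auto. Qed.

Lemma Derive_fun (f g : R -> R) : (forall x, is_derive f x (g x)) -> Derive f = g.
Proof. intros H; apply functional_extensionality; intros; apply is_derive_unique; auto. Qed.

Fixpoint Cn (n : nat) (f : R -> R) : Prop :=
  match n with O => True | S m => (forall x, ex_derive f x) /\ Cn m (Derive f) end.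
Definition Sm f := forall n, Cn n f.

Lemma Cn_ext n f g : (forall x, f x = g x) -> Cn n f -> Cn n g.
Proof. intros H; replace g with f; auto. apply functional_extensionality; auto. Qed.

Lemma Cn_down n f : Cn (S n) f -> Cn n f.
Proof. revert f; induction n; simpl; intros f H; auto. destruct H; split; auto. Qed.

Lemma Cn_ex n f : Cn (S n) f -> forall x, ex_derive f x.
Proof. intros [H _]; auto. Qed.

Lemma Cn_plus n : forall f g, Cn n f -> Cn n g -> Cn n (fun x => f x + g x).
Proof. induction n; simpl; auto. intros f g [H1 H2] [H3 H4]; split.
- intros; apply (ex_derive_plus f g); auto.
- apply Cn_ext with (fun x => Derive f x + Derive g x).
  intros; rewrite Derive_plus; auto. auto.
Qed.

Lemma Cn_mult n : forall f g, Cn n f -> Cn n g -> Cn n (fun x => f x * g x).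
Proof. induction n; simpl; auto. intros f g Hf Hg.
  pose proof (Cn_down _ _ Hf) as Hf'; pose proof (Cn_down _ _ Hg) as Hg'.
  destruct Hf as [H1 H2], Hg as [H3 H4]; split.
- intros; apply ex_derive_mult; auto.
- apply Cn_ext with (fun x => Derive f x * g x + f x * Derive g x).
  intros; rewrite Derive_mult; auto. apply Cn_plus; apply IHn; auto.
Qed.

Lemma Cn_const n c : Cn n (fun _ => c).
Proof. revert c; induction n; simpl; intros; auto. split.
  intros; apply ex_derive_const. apply Cn_ext with (fun _ => 0); auto.
  intros; rewrite Derive_const; auto. Qed.

Lemma Cn_comp n : forall g f, Sm g -> Cn n f -> Cn n (fun x => g (f x)).
Proof. induction n; simpl; auto. intros g f Hg Hf.
  pose proof (Cn_down _ _ Hf) as Hf'. destruct Hf as [H1 H2].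
  assert (Hg1 : forall x, ex_derive g x) by (apply (Cn_ex 0); apply Hg).
  assert (Hg2 : Sm (Derive g)) by (intros m; apply (Hg (S m))).
  split.
- intros; apply ex_derive_comp; auto.
- apply Cn_ext with (fun x => Derive g (f x) * Derive f x).
  intros; rewrite (Derive_comp g f x); auto; ring. apply Cn_mult; auto.
Qed.

Lemma Sm_plus f g : Sm f -> Sm g -> Sm (fun x => f x + g x).
Proof. intros A B n; apply Cn_plus; auto. Qed.
Lemma Sm_mult f g : Sm f -> Sm g -> Sm (fun x => f x * g x).
Proof. intros A B n; apply Cn_mult; auto. Qed.
Lemma Sm_const c : Sm (fun _ => c).
Proof. intros n; apply Cn_const. Qed.
Lemma Sm_comp g f : Sm g -> Sm f -> Sm (fun x => g (f x)).
Proof. intros A B n; apply Cn_comp; auto. Qed.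
Lemma Sm_ext f g : (forall x, f x = g x) -> Sm f -> Sm g.
Proof. intros H A n; apply Cn_ext with f; auto. Qed.
Lemma Sm_opp f : Sm f -> Sm (fun x => - f x).
Proof. intros A. apply Sm_ext with (fun x => (-1) * f x). intros; ring.
  apply Sm_mult; auto. apply Sm_const. Qed.
Lemma Sm_ex f : Sm f -> forall x, ex_derive f x.
Proof. intros A; apply (Cn_ex 0); apply A. Qed.
Lemma Sm_Derive f : Sm f -> Sm (Derive f).
Proof. intros A n; apply (A (S n)). Qed.
Lemma Sm_is_derive f x : Sm f -> is_derive f x (Derive f x).
Proof. intros; apply Derive_correct; apply Sm_ex; auto. Qed.

Lemma Sm_sincos : Sm sin /\ Sm cos.
Proof.
  assert (Ds : Derive sin = cos) by (apply Derive_fun; apply is_derive_sin).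
  assert (Dc : Derive cos = fun x => - sin x) by (apply Derive_fun; apply is_derive_cos).
  assert (forall n, Cn n sin /\ Cn n cos).
  { induction n; simpl; auto. destruct IHn as [A B]. split; split.
    - intros x; eexists; apply is_derive_sin.
    - rewrite Ds; auto.
    - intros x; eexists; apply is_derive_cos.
    - rewrite Dc. apply Cn_ext with (fun x => (-1) * sin x). intros; ring.
      apply Cn_mult; auto; apply Cn_const. }
  split; intros n; apply H.
Qed.

Lemma Sm_sqrt_inv K : Sm K -> (forall x, 0 < K x) ->
  Sm (fun x => sqrt (K x)) /\ Sm (fun x => / K x).
Proof.
  intros HK Hp.
  assert (forall n, Cn n (fun x => sqrt (K x)) /\ Cn n (fun x => / K x)).
  { induction n; simpl; auto. destruct IHn as [A B].
    assert (HD : forall x, is_derive K x (Derive K x)) by (intros; apply Sm_is_derive; auto).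
    split; split.
    - intros x; eexists; apply is_derive_sqrt; auto.
    - apply Cn_ext with (fun x => Derive K x * ((/2) * (sqrt (K x) * / K x))).
      + intros x. symmetry; apply is_derive_unique.
        eapply D_eq. apply is_derive_sqrt; auto.
        pose proof (sqrt_lt_R0 _ (Hp x)). pose proof (sqrt_sqrt (K x) (Rlt_le _ _ (Hp x))).
        pose proof (Hp x).
        assert (E : / K x = / sqrt (K x) * / sqrt (K x)) by (rewrite <- Rinv_mult; rewrite H0; auto). rewrite E. field. lra.
      + apply Cn_mult. apply (Sm_Derive _ HK). apply Cn_mult. apply Cn_const. apply Cn_mult; auto.
    - intros x; eexists; apply is_derive_inv; auto. apply Rgt_not_eq, Hp.
    - apply Cn_ext with (fun x => (-1) * (Derive K x * (/ K x * / K x))).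
      + intros x. symmetry; apply is_derive_unique.
        eapply D_eq. apply is_derive_inv; auto. apply Rgt_not_eq, Hp.
        pose proof (Hp x). field. lra.
      + apply Cn_mult. apply Cn_const. apply Cn_mult. apply (Sm_Derive _ HK). apply Cn_mult; auto. }
  split; intros n; apply H.
Qed.

Lemma RInt_deriv (f : R -> R) : (forall x, ex_derive f x) -> forall s,
  is_derive (fun x => RInt f 0 x) s (f s).
Proof.
  intros H s. apply (is_derive_RInt f (fun x => RInt f 0 x) 0 s).
  - exists (mkposreal 1 Rlt_0_1). intros b _. apply (RInt_correct f 0 b).
    apply (ex_RInt_continuous f). intros z _; apply (ex_derive_continuous f); auto.
  - apply (ex_derive_continuous f); auto.
Qed.

Lemma Sm_RInt f : Sm f -> Sm (fun x => RInt f 0 x).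
Proof.
  intros A n; destruct n; simpl; auto. split.
  - intros x; eexists; apply RInt_deriv; apply Sm_ex; auto.
  - rewrite (Derive_fun _ f). apply A. apply RInt_deriv; apply Sm_ex; auto.
Qed.

Lemma Dn_S (f : R -> R) m : forall t, Derive_n (Derive f) m t = Derive_n f (S m) t.
Proof. induction m; intros t; simpl; auto.
  f_equal. apply functional_extensionality; intros; rewrite IHm; reflexivity. Qed.

Lemma Sm_of_exn f : (forall m x, ex_derive_n f m x) -> Sm f.
Proof.
  intros H n; revert f H; induction n; simpl; intros f H; auto. split.
  - intros x; apply (H 1%nat x).
  - apply IHn. intros m x; destruct m; simpl; auto.
    pose proof (H (S (S m)) x) as Hm. simpl in Hm.
    eapply ex_derive_ext; [| exact Hm]. intros t. rewrite Dn_S. reflexivity.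
Qed.

Lemma exn_of_Sm m : forall f, Sm f -> forall x, ex_derive_n f m x.
Proof.
  induction m; simpl; auto. intros f A x. destruct m. simpl. apply Sm_ex; auto.
  pose proof (IHm (Derive f) (Sm_Derive _ A) x) as B. simpl in B.
  eapply ex_derive_ext; [| exact B]. intros t. rewrite Dn_S. reflexivity.
Qed.

Definition pj (i : nat) (v : V3) : R :=
  match i with O => vx v | 1%nat => vy v | _ => vz v end.

Lemma pj_add i u v : pj i (vadd u v) = pj i u + pj i v.
Proof. destruct i as [|[|]]; reflexivity. Qed.
Lemma pj_scal i a v : pj i (vscal a v) = a * pj i v.
Proof. destruct i as [|[|]]; reflexivity. Qed.
Lemma pj_sub i u v : pj i (vsub u v) = pj i u - pj i v.
Proof. unfold vsub; rewrite pj_add, pj_scal; ring. Qed.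
Lemma dot_pj u v : dot u v = pj 0 u * pj 0 v + pj 1 u * pj 1 v + pj 2 u * pj 2 v.
Proof. reflexivity. Qed.
Lemma cross_pj0 u v : pj 0 (cross u v) = pj 1 u * pj 2 v - pj 2 u * pj 1 v.
Proof. reflexivity. Qed.
Lemma cross_pj1 u v : pj 1 (cross u v) = pj 2 u * pj 0 v - pj 0 u * pj 2 v.
Proof. reflexivity. Qed.
Lemma cross_pj2 u v : pj 2 (cross u v) = pj 0 u * pj 1 v - pj 1 u * pj 0 v.
Proof. reflexivity. Qed.
Lemma vec_eq u v : (forall i, (i <= 2)%nat -> pj i u = pj i v) -> u = v.
Proof. intros H. destruct u as [[a b] c], v as [[a' b'] c'].
  pose proof (H 0%nat ltac:(auto)). pose proof (H 1%nat ltac:(auto)).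
  pose proof (H 2%nat ltac:(auto)). cbv [pj vx vy vz] in *; simpl in *. subst; reflexivity. Qed.
Lemma vderiv_pj f s d : vderiv f s d -> forall i, is_derive (fun u => pj i (f u)) s (pj i d).
Proof. intros [A [B C]] i; destruct i as [|[|]]; auto. Qed.
Lemma to_vderiv f s d : (forall i, is_derive (fun u => pj i (f u)) s (pj i d)) -> vderiv f s d.
Proof. intros H; split; [|split]; [apply (H 0%nat)|apply (H 1%nat)|apply (H 2%nat)]. Qed.
Lemma vsmooth_pj f : vsmooth f -> forall i, Sm (fun u => pj i (f u)).
Proof. intros H i; apply Sm_of_exn; intros m x; destruct (H m x) as [A [B C]].
  destruct i as [|[|]]; auto. Qed.
Lemma to_vsmooth f : (forall i, Sm (fun u => pj i (f u))) -> vsmooth f.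
Proof. intros H m x; split; [|split];
  [apply (exn_of_Sm m _ (H 0%nat))|apply (exn_of_Sm m _ (H 1%nat))|apply (exn_of_Sm m _ (H 2%nat))]. Qed.

Lemma per_deriv (f : R -> R) L s a b : (forall u, f (u + L) = f u) ->
  is_derive f s a -> is_derive f (s + L) b -> a = b.
Proof.
  intros Hp Ha Hb.
  assert (H : is_derive (fun u => f (u + L)) s (1 * b)).
  { apply (D_compf f (fun u => u + L)). auto.
    eapply D_eq. apply D_plus. apply (is_derive_id s). apply D_const. rewrite Rplus_0_r; reflexivity. }
  rewrite Rmult_1_l in H.
  apply is_derive_ext with (g := f) in H; [|auto].
  rewrite <- (is_derive_unique _ _ _ Ha), <- (is_derive_unique _ _ _ H). auto.
Qed.

Lemma osc_dot (e t n : V3) al be :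
  dot (vsub (vadd e (vadd (vscal al t) (vscal be n))) e) t = al * dot t t + be * dot n t /\
  dot (vsub (vadd e (vadd (vscal al t) (vscal be n))) e) n = al * dot t n + be * dot n n.
Proof. rewrite !dot_pj, !pj_sub, !pj_add, !pj_scal. split; ring. Qed.

Lemma D_csub (f : R -> R) (c x a : R) : is_derive f x a -> is_derive (fun y => c - f y) x (- a).
Proof. intros H. eapply D_eq. apply (is_derive_minus (fun _ => c) f x 0 a). apply D_const. auto.
  unfold minus, plus, opp; simpl. ring. Qed.
Lemma D_opp (f : R -> R) (x a : R) : is_derive f x a -> is_derive (fun y => - f y) x (- a).
Proof. intros H. apply (is_derive_opp f x a H). Qed.
Lemma Sm_csub c f : Sm f -> Sm (fun x => c - f x).
Proof. intros. apply Sm_plus. apply Sm_const. apply Sm_opp; auto. Qed.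
Lemma D_sub (f g : R -> R) (x a b : R) : is_derive f x a -> is_derive g x b ->
  is_derive (fun y => f y - g y) x (a - b).
Proof. intros. apply (is_derive_minus f g x a b); auto. Qed.
Lemma dot_comm u v : dot u v = dot v u.
Proof. rewrite !dot_pj; ring. Qed.

Theorem mainTheorem8 (L : R) (e : R -> V3) (k tau : R -> R) (t n b : R -> V3) :
  frenet_closed_curve L e k tau t n b ->
  exists c : V3,
    in_osc e t n 0 c /\
    forall p : V3, in_osc e t n 0 p ->
      (exists xi : R -> V3, is_involute L e t n b p xi) /\
      (forall xi : R -> V3, is_involute L e t n b p xi ->
         xi L = vadd c (rot (RInt k 0 L) (t 0) (n 0) (vsub p (e 0)))).
Proof.
  intros (HL & Hes & Hper & Het & Htt & Hnn & Htn & Hb & Hk & Htau & Htd & Hnd & Hbd).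
  assert (Se : forall i, Sm (fun u => pj i (e u))) by (apply vsmooth_pj; auto).
  assert (Et : forall i, (fun u => pj i (t u)) = Derive (fun u => pj i (e u))).
  { intros i; symmetry; apply Derive_fun; intros s; apply (vderiv_pj _ _ _ (Het s)). }
  assert (St : forall i, Sm (fun u => pj i (t u))).
  { intros i; rewrite Et; apply Sm_Derive; auto. }
  assert (Dt : forall i s, is_derive (fun u => pj i (t u)) s (k s * pj i (n s))).
  { intros i s; pose proof (vderiv_pj _ _ _ (Htd s) i) as H; rewrite pj_scal in H; exact H. }
  assert (Skn : forall i, Sm (fun u => k u * pj i (n u))).
  { intros i. apply Sm_ext with (Derive (fun u => pj i (t u))).
    intros u; apply is_derive_unique; apply Dt.
    apply Sm_Derive; auto. }
  set (K := fun u => (k u * pj 0 (n u)) * (k u * pj 0 (n u)) +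
        (k u * pj 1 (n u)) * (k u * pj 1 (n u)) + (k u * pj 2 (n u)) * (k u * pj 2 (n u))).
  assert (EK : forall u, K u = k u * k u).
  { intros u. pose proof (Hnn u) as H. rewrite dot_pj in H. unfold K.
    rewrite <- (Rmult_1_r (k u * k u)), <- H; ring. }
  assert (SK : Sm K).
  { unfold K. repeat apply Sm_plus; apply Sm_mult; auto. }
  assert (PK : forall u, 0 < K u).
  { intros u; rewrite EK; pose proof (Hk u); nra. }
  destruct (Sm_sqrt_inv K SK PK) as [Ssq Sinv].
  assert (Sk : Sm k).
  { apply Sm_ext with (fun u => sqrt (K u)).
    intros u; rewrite EK; apply sqrt_square; left; auto. auto. }
  assert (Sn : forall i, Sm (fun u => pj i (n u))).
  { intros i. apply Sm_ext with (fun u => (k u * pj i (n u)) * (k u * / K u)).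
    intros u; rewrite EK; pose proof (Hk u); field; lra.
    apply Sm_mult; auto. apply Sm_mult; auto. }
  set (th := fun s => RInt k 0 s).
  assert (Dth : forall s, is_derive th s (k s)) by (apply RInt_deriv, Sm_ex; auto).
  assert (Sth : Sm th) by (apply Sm_RInt; auto).
  destruct Sm_sincos as [Ssin Scos].
  assert (Sc : Sm (fun u => cos (th u))) by (apply Sm_comp; auto).
  assert (Ss : Sm (fun u => sin (th u))) by (apply Sm_comp; auto).
  set (Ic := fun s => RInt (fun u => cos (th u)) 0 s).
  set (Is := fun s => RInt (fun u => sin (th u)) 0 s).
  assert (DIc : forall s, is_derive Ic s (cos (th s))) by (apply RInt_deriv, Sm_ex; auto).
  assert (DIs : forall s, is_derive Is s (sin (th s))) by (apply RInt_deriv, Sm_ex; auto).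
  assert (SIc : Sm Ic) by (apply Sm_RInt; auto).
  assert (SIs : Sm Is) by (apply Sm_RInt; auto).
  assert (th0 : th 0 = 0) by (unfold th; rewrite RInt_point; reflexivity).
  assert (Ic0 : Ic 0 = 0) by (unfold Ic; rewrite RInt_point; reflexivity).
  assert (Is0 : Is 0 = 0) by (unfold Is; rewrite RInt_point; reflexivity).
  assert (Dsin : forall s, is_derive (fun u => sin (th u)) s (k s * cos (th s))).
  { intros s; apply (D_compf sin th); auto. apply is_derive_sin. }
  assert (Dcos : forall s, is_derive (fun u => cos (th u)) s (k s * - sin (th s))).
  { intros s; apply (D_compf cos th); auto. apply is_derive_cos. }
  assert (De : forall i s, is_derive (fun u => pj i (e u)) s (pj i (t s))).
  { intros i s; apply (vderiv_pj _ _ _ (Het s)). }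
  assert (Pt : forall i s, pj i (t (s + L)) = pj i (t s)).
  { intros i s; symmetry; apply (per_deriv (fun u => pj i (e u)) L s); auto.
    intros u; rewrite Hper; auto. }
  assert (eL : e L = e 0) by (rewrite <- (Hper 0), Rplus_0_l; auto).
  assert (tL : t L = t 0).
  { apply vec_eq; intros i _. rewrite <- (Pt i 0), Rplus_0_l; auto. }
  assert (Pkn : forall i, k 0 * pj i (n 0) = k L * pj i (n L)).
  { intros i. apply (per_deriv (fun u => pj i (t u)) L 0); auto.
    replace (0 + L) with L by ring. auto. }
  assert (kL : k L = k 0).
  { assert (E0 := EK 0). assert (E1 := EK L). unfold K in E0, E1.
    rewrite !Pkn in E0. rewrite E1 in E0. pose proof (Hk 0); pose proof (Hk L). nra. }
  assert (nL : n L = n 0).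
  { apply vec_eq; intros i _. pose proof (Pkn i) as H. rewrite kL in H.
    pose proof (Hk 0). apply Rmult_eq_reg_l with (k 0); lra. }
  change (RInt k 0 L) with (th L).
  exists (vadd (e 0) (vadd (vscal (- cos (th L) * Ic L - sin (th L) * Is L) (t 0))
                           (vscal (sin (th L) * Ic L - cos (th L) * Is L) (n 0)))).
  split. { do 2 eexists; reflexivity. }
  intros p [a0 [b0 Hp]]. subst p. split.
  -
    set (al := fun s => cos (th s) * (a0 - Ic s) + sin (th s) * (b0 - Is s)).
    set (be := fun s => - sin (th s) * (a0 - Ic s) + cos (th s) * (b0 - Is s)).
    assert (Sal : Sm al).
    { unfold al. apply Sm_plus; apply Sm_mult; try assumption; apply Sm_csub; assumption. }
    assert (Sbe : Sm be).
    { unfold be. apply Sm_plus; apply Sm_mult; try assumption.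
      apply Sm_opp; assumption. apply Sm_csub; assumption. apply Sm_csub; assumption. }
    assert (Dal : forall s, is_derive al s (k s * be s - 1)).
    { intros s. unfold al. eapply D_eq.
      apply D_plus; apply D_mult. apply Dcos. apply D_csub, DIc. apply Dsin. apply D_csub, DIs.
      unfold be. pose proof (sin2_cos2 (th s)). unfold Rsqr in *. nra. }
    assert (Dbe : forall s, is_derive be s (- k s * al s)).
    { intros s. unfold be. eapply D_eq.
      apply D_plus; apply D_mult. apply D_opp, Dsin. apply D_csub, DIc. apply Dcos. apply D_csub, DIs.
      unfold al. ring. }
    assert (Dn : forall i s, is_derive (fun u => pj i (n u)) s
                 (- k s * pj i (t s) + tau s * pj i (b s))).
    { intros i s; pose proof (vderiv_pj _ _ _ (Hnd s) i) as H.
      rewrite pj_add, !pj_scal in H; exact H. }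
    assert (al0 : al 0 = a0) by (unfold al; rewrite th0, Ic0, Is0, cos_0, sin_0; ring).
    assert (be0 : be 0 = b0) by (unfold be; rewrite th0, Ic0, Is0, cos_0, sin_0; ring).
    exists (fun s => vadd (e s) (vadd (vscal (al s) (t s)) (vscal (be s) (n s)))).
    split; [|split].
    + apply to_vsmooth; intros i.
      apply Sm_ext with (fun u => pj i (e u) + (al u * pj i (t u) + be u * pj i (n u))).
      { intros u; rewrite !pj_add, !pj_scal; reflexivity. }
      apply Sm_plus; auto. apply Sm_plus; apply Sm_mult; auto.
    + simpl. rewrite al0, be0. reflexivity.
    + intros s Hs. split. { do 2 eexists; reflexivity. }
      exists (be s * tau s), (vscal (be s * tau s) (b s)). split; auto.
      apply to_vderiv; intros i.
      apply is_derive_ext with (f := fun u => pj i (e u) + (al u * pj i (t u) + be u * pj i (n u))).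
      { intros u; rewrite !pj_add, !pj_scal; reflexivity. }
      eapply D_eq. apply D_plus. apply De. apply D_plus; apply D_mult.
      apply Dal. apply Dt. apply Dbe. apply Dn.
      rewrite pj_scal. ring.
  - intros xi (Sxi & X0 & Hx).
    assert (Dn : forall i s, is_derive (fun u => pj i (n u)) s
                 (- k s * pj i (t s) + tau s * pj i (b s))).
    { intros i s; pose proof (vderiv_pj _ _ _ (Hnd s) i) as H.
      rewrite pj_add, !pj_scal in H; exact H. }
    set (a := fun s => dot (vsub (xi s) (e s)) (t s)).
    set (cc := fun s => dot (vsub (xi s) (e s)) (n s)).
    assert (Dac : forall s, 0 <= s <= L ->
      is_derive a s (k s * cc s - 1) /\ is_derive cc s (- k s * a s)).
    { intros s Hs. destruct (Hx s Hs) as [[al [be Hxs]] [lam [d [Hd Hdl]]]].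
      assert (Dx := vderiv_pj _ _ _ Hd).
      assert (Pb : dot (vsub (xi s) (e s)) (b s) = 0).
      { rewrite Hxs, Hb, !dot_pj, !pj_sub, !pj_add, !pj_scal, cross_pj0, cross_pj1, cross_pj2.
        ring. }
      assert (Ptt := Htt s). assert (Ptn := Htn s).
      rewrite dot_pj in Ptt, Ptn.
      assert (Pb' : tau s * dot (vsub (xi s) (e s)) (b s) = 0) by (rewrite Pb; ring).
      rewrite dot_pj, !pj_sub in Pb'.
      split.
      - apply is_derive_ext with (f := fun u =>
          (pj 0 (xi u) - pj 0 (e u)) * pj 0 (t u) + (pj 1 (xi u) - pj 1 (e u)) * pj 1 (t u)
          + (pj 2 (xi u) - pj 2 (e u)) * pj 2 (t u)).
        { intros u; unfold a; rewrite dot_pj, !pj_sub; reflexivity. }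
        eapply D_eq. apply D_plus; [apply D_plus|].
        apply D_mult; [apply D_sub; [apply (Dx 0%nat)|apply (De 0%nat)]|apply (Dt 0%nat)].
        apply D_mult; [apply D_sub; [apply (Dx 1%nat)|apply (De 1%nat)]|apply (Dt 1%nat)].
        apply D_mult; [apply D_sub; [apply (Dx 2%nat)|apply (De 2%nat)]|apply (Dt 2%nat)].
        unfold cc; rewrite dot_pj, !pj_sub.
        rewrite Hdl, !pj_scal, Hb, cross_pj0, cross_pj1, cross_pj2. lra.
      - apply is_derive_ext with (f := fun u =>
          (pj 0 (xi u) - pj 0 (e u)) * pj 0 (n u) + (pj 1 (xi u) - pj 1 (e u)) * pj 1 (n u)
          + (pj 2 (xi u) - pj 2 (e u)) * pj 2 (n u)).
        { intros u; unfold cc; rewrite dot_pj, !pj_sub; reflexivity. }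
        eapply D_eq. apply D_plus; [apply D_plus|].
        apply D_mult; [apply D_sub; [apply (Dx 0%nat)|apply (De 0%nat)]|apply (Dn 0%nat)].
        apply D_mult; [apply D_sub; [apply (Dx 1%nat)|apply (De 1%nat)]|apply (Dn 1%nat)].
        apply D_mult; [apply D_sub; [apply (Dx 2%nat)|apply (De 2%nat)]|apply (Dn 2%nat)].
        unfold a; rewrite dot_pj, !pj_sub.
        rewrite Hdl, !pj_scal, Hb, cross_pj0, cross_pj1, cross_pj2.
        rewrite Hb, cross_pj0, cross_pj1, cross_pj2 in Pb'. lra. }
    set (F := fun u => a u * cos (th u) - cc u * sin (th u) + Ic u).
    set (G := fun u => a u * sin (th u) + cc u * cos (th u) + Is u).
    assert (FL : F 0 = F L).
    { apply eq_is_derive; auto. intros s Hs. destruct (Dac s Hs) as [D1 D2].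
      unfold F. eapply D_eq. apply D_plus. apply D_sub; apply D_mult.
      apply D1. apply Dcos. apply D2. apply Dsin. apply DIc. unfold zero; simpl. ring. }
    assert (GL : G 0 = G L).
    { apply eq_is_derive; auto. intros s Hs. destruct (Dac s Hs) as [D1 D2].
      unfold G. eapply D_eq. apply D_plus. apply D_plus; apply D_mult.
      apply D1. apply Dsin. apply D2. apply Dcos. apply DIs. unfold zero; simpl. ring. }
    assert (a0e : a 0 = a0 /\ cc 0 = b0).
    { unfold a, cc. rewrite X0. destruct (osc_dot (e 0) (t 0) (n 0) a0 b0) as [E1 E2].
      rewrite E1, E2, Htt, Hnn, dot_comm, Htn. split; ring. }
    destruct (Hx L (conj (Rlt_le _ _ HL) (Rle_refl L))) as [[al [be HxL]] _].
    assert (aLe : a L = al /\ cc L = be).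
    { unfold a, cc. rewrite HxL. destruct (osc_dot (e L) (t L) (n L) al be) as [E1 E2].
      rewrite E1, E2, Htt, Hnn, dot_comm, Htn. split; ring. }
    unfold F, G in FL, GL. destruct a0e as [A1 A2]; destruct aLe as [A3 A4].
    rewrite A1, A2, A3, A4, th0, Ic0, Is0, cos_0, sin_0 in *.
    assert (FL' : al * cos (th L) - be * sin (th L) + Ic L = a0) by (rewrite <- FL; ring).
    assert (GL' : al * sin (th L) + be * cos (th L) + Is L = b0) by (rewrite <- GL; ring).
    assert (Hal : al = cos (th L) * (a0 - Ic L) + sin (th L) * (b0 - Is L)).
    { assert (H1 := sin2_cos2 (th L)). unfold Rsqr in H1. rewrite <- FL', <- GL'.
      transitivity (al * (sin (th L) * sin (th L) + cos (th L) * cos (th L))).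
      rewrite H1; ring. ring. }
    assert (Hbe : be = - sin (th L) * (a0 - Ic L) + cos (th L) * (b0 - Is L)).
    { assert (H1 := sin2_cos2 (th L)). unfold Rsqr in H1. rewrite <- FL', <- GL'.
      transitivity (be * (sin (th L) * sin (th L) + cos (th L) * cos (th L))).
      rewrite H1; ring. ring. }
    rewrite HxL, eL, tL, nL. unfold rot. cbv zeta.
    destruct (osc_dot (e 0) (t 0) (n 0) a0 b0) as [E1 E2].
    rewrite E1, E2, Htt, Hnn, dot_comm, Htn.
    apply vec_eq; intros i _. rewrite !pj_add, !pj_scal, Hal, Hbe. ring.
Qed.
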